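(* Let $s$ be a degree sequence and $G,H\in\mathcal{P}(s)$. Then $\operatorname{cycles}(G)=\kappa(G)$ if and only if $\operatorname{cycles}(H)=\kappa(H)$.
   Context: Graphs are finite, simple, labeled with vertex set $[n]$; the degree sequence of $G$ is $(d_1,\dots,d_n)$ with $d_i$ the degree of vertex $i$. A pseudoforest is a graph each of whose connected components contains at most one cycle; $\mathcal{P}(s)$ is the set of pseudoforests with degree sequence $s$. $\kappa(G)$ is the number of connected components and $\operatorname{cycles}(G)$ the number of subgraphs of $G$ isomorphic to a cycle. *)

(* Defs.v *)
From mathcomp Require Import all_boot.
Set Implicit Arguments. Unset Strict Implicit. Unset Printing Implicit Defensive.

(* A finite simple labeled graph on vertex set [n] = 'I_n is given by its
   edge set: a set of unordered pairs {i,j} with i <> j. *)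
Definition graph (n : nat) := {set {set 'I_n}}.

Definition simple_graph n (G : graph n) : Prop :=
  forall e, e \in G -> #|e| = 2.

Definition adj n (G : graph n) : rel 'I_n := fun x y => [set x; y] \in G.

Definition deg n (G : graph n) (i : 'I_n) : nat := #|[set e in G | i \in e]|.

Definition comp n (G : graph n) (x : 'I_n) : {set 'I_n} :=
  [set y | connect (adj G) x y].

Definition kappa n (G : graph n) : nat := #|[set comp G x | x : 'I_n]|.

(* F is the edge set of a cycle: there are k >= 3 distinct vertices
   v_0, ..., v_{k-1} (encoded as an injective f : 'I_k -> 'I_n; k <= n
   necessarily, hence k : 'I_n.+1) such that F = { v_i v_{i+1 mod k} : i < k }.
   A subgraph isomorphic to a cycle is determined by its edge set
   (its vertex set is the union of its edges). *)
Definition is_cycle_edges n (F : {set {set 'I_n}}) : bool :=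
  [exists k : 'I_n.+1, exists f : {ffun 'I_k -> 'I_n},
    [&& 3 <= k, injectiveb f &
        F == [set [set f i; f (ordS i)] | i : 'I_k]]].

Definition cycle_subgraphs n (G : graph n) : {set {set {set 'I_n}}} :=
  [set F : {set {set 'I_n}} | (F \subset G) && is_cycle_edges F].

Definition cycles n (G : graph n) : nat := #|cycle_subgraphs G|.

Definition pseudoforest n (G : graph n) : Prop :=
  forall x : 'I_n,
    #|[set F in cycle_subgraphs G | [forall e in F, e \subset comp G x]]| <= 1.

Definition has_degree_sequence n (G : graph n) (s : 'I_n -> nat) : Prop :=
  forall i, deg G i = s i.

Definition in_P n (s : 'I_n -> nat) (G : graph n) : Prop :=
  [/\ simple_graph G, pseudoforest G & has_degree_sequence G s].

(* Main.v *)
Require Import Defs.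
From mathcomp Require Import all_boot.
From mathcomp Require Import zify.
Set Implicit Arguments. Unset Strict Implicit. Unset Printing Implicit Defensive.

Lemma adj_sym n (G : graph n) : symmetric (adj G).
Proof. by move=> x y; rewrite /adj setUC. Qed.

Lemma connect_symG n (G : graph n) : connect_sym (adj G).
Proof. exact/sym_connect_sym/adj_sym. Qed.

Lemma comp_eq n (G : graph n) x y : connect (adj G) x y -> Defs.comp G x = Defs.comp G y.
Proof.
move=> cxy; apply/setP=> z; rewrite !inE.
apply/idP/idP => h.
- by apply: connect_trans h; rewrite connect_symG.
- exact: connect_trans cxy h.
Qed.

Lemma set2_cases (T : finType) (u v a b : T) : u != v -> [set u; v] = [set a; b] ->
  (a = u /\ b = v) \/ (a = v /\ b = u).
Proof.
move=> uv E.
have ha : a \in [set u; v] by rewrite E !inE eqxx.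
have hb : b \in [set u; v] by rewrite E !inE eqxx orbT.
have hu : u \in [set a; b] by rewrite -E !inE eqxx.
have hv : v \in [set a; b] by rewrite -E !inE eqxx orbT.
rewrite !inE in ha hb hu hv.
have vu : v != u by rewrite eq_sym.
have [ea|nea] := eqVneq a u.
  subst a; left; split => //; move: hv; rewrite (negbTE vu) /=.
  by move/eqP.
have ea : a = v by move: ha; rewrite (negbTE nea) => /eqP.
subst a; right; split => //; move: hu; rewrite (negbTE uv) /=.
by move/eqP.
Qed.

Lemma connect_subD n (G : graph n) e x y :
  connect (adj (G :\ e)) x y -> connect (adj G) x y.
Proof.
apply: connect_sub => a b; rewrite /adj in_setD1 => /andP[_ h]; exact: connect1.
Qed.

Lemma connectD n (G : graph n) u v x y : u != v ->
  connect (adj G) x y ->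
  [|| connect (adj (G :\ [set u; v])) x y,
      connect (adj (G :\ [set u; v])) x u && connect (adj (G :\ [set u; v])) v y |
      connect (adj (G :\ [set u; v])) x v && connect (adj (G :\ [set u; v])) u y].
Proof.
move=> uv /connectP [p pth ->]; elim: p x pth => [|z p IH] x /=.
  by rewrite connect0.
set G' := G :\ [set u; v].
case/andP => axz /IH; set w := last z p.
case: (boolP (adj G' x z)) => a'.
  case/or3P => h.
  - by rewrite (connect_trans (connect1 a') h).
  - by case/andP: h => h1 h2; rewrite (connect_trans (connect1 a') h1) h2 orbT.
  - by case/andP: h => h1 h2; rewrite (connect_trans (connect1 a') h1) h2 !orbT.
have E : [set u; v] = [set x; z].
  by move: a' axz; rewrite /adj in_setD1 => /nandP [/negbNE/eqP -> |/negP] //.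
case: (set2_cases uv E) => [[-> ->]|[-> ->]]; case/or3P => h.
- by rewrite connect0 h orbT.
- by case/andP: h => h1 h2; rewrite connect0 h2 orbT.
- by case/andP: h => h1 h2; rewrite h2.
- by rewrite connect0 h !orbT.
- by case/andP: h => h1 h2; rewrite h2.
- by case/andP: h => h1 h2; rewrite connect0 h2 !orbT.
Qed.

Lemma walk n (r : rel 'I_n) (g : nat -> 'I_n) a t :
  (forall j, a <= j < a + t -> r (g j) (g j.+1)) -> connect r (g a) (g (a + t)).
Proof.
elim: t => [|t IH] h; first by rewrite addn0 connect0.
rewrite addnS; apply: connect_trans (IH _) (connect1 (h _ _)).
- by move=> j /andP[h1 h2]; apply: h; rewrite h1 /=; lia.
- apply/andP; split; lia.
Qed.

Definition gg n k (kp : 0 < k) (f : 'I_k -> 'I_n) (j : nat) : 'I_n :=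
  f (Ordinal (ltn_pmod j kp)).

Lemma gg_ord n k (kp : 0 < k) (f : 'I_k -> 'I_n) (i : 'I_k) : gg kp f i = f i.
Proof. by rewrite /gg; congr f; apply: val_inj; rewrite /= modn_small. Qed.

Lemma gg_S n k (kp : 0 < k) (f : 'I_k -> 'I_n) j :
  gg kp f j.+1 = f (ordS (Ordinal (ltn_pmod j kp))).
Proof. by rewrite /gg; congr f; apply: val_inj; rewrite /= -[in RHS]addn1 modnDml addn1. Qed.

Lemma gg_add n k (kp : 0 < k) (f : 'I_k -> 'I_n) j : gg kp f (j + k) = gg kp f j.
Proof. by rewrite /gg; congr f; apply: val_inj; rewrite /= modnDr. Qed.

Lemma gg_edge n k (kp : 0 < k) (f : 'I_k -> 'I_n) j :
  [set gg kp f j; gg kp f j.+1] \in [set [set f i; f (ordS i)] | i : 'I_k].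
Proof. by rewrite gg_S; apply: imset_f. Qed.

Lemma cycle_conn n (r : rel 'I_n) k (kp : 0 < k) (f : 'I_k -> 'I_n) :
  (forall j, r (gg kp f j) (gg kp f j.+1)) -> forall a b : 'I_k, connect r (f a) (f b).
Proof.
move=> h a b; rewrite -!(gg_ord kp f).
have := walk (g := gg kp f) (a := a) (t := b + k - a) (fun j _ => h j).
have -> : a + (b + k - a) = b + k by have := ltn_ord a; lia.
by rewrite gg_add.
Qed.

Lemma gg_inj n k (kp : 0 < k) (f : 'I_k -> 'I_n) a b : injective f ->
  gg kp f a = gg kp f b -> a %% k = b %% k.
Proof. by move=> fi /fi /(congr1 val). Qed.

Lemma gg_ordS n k (kp : 0 < k) (f : 'I_k -> 'I_n) (i : 'I_k) : f (ordS i) = gg kp f i.+1.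
Proof. by rewrite gg_S; congr (f (ordS _)); apply: val_inj; rewrite /= modn_small. Qed.

Lemma cyc_in_comp n (G : graph n) F e u : F \in cycle_subgraphs G -> e \in F -> u \in e ->
  [forall e' in F, e' \subset Defs.comp G u].
Proof.
rewrite inE => /andP[FG /existsP[k /existsP[f /and3P[k3 _ /eqP EF]]]].
have kp : 0 < k by lia.
have step : forall j, adj G (gg kp f j) (gg kp f j.+1).
  by move=> j; rewrite /adj; apply: (subsetP FG); rewrite EF gg_edge.
subst F => /imsetP[i _ ->] ui.
have cu : forall a : 'I_k, connect (adj G) u (f a).
  by move=> a; move: ui; rewrite !inE => /orP[]/eqP->; apply: cycle_conn.
apply/forallP => e'; apply/implyP => /imsetP[a _ ->]; apply/subsetP => w.
by rewrite !inE => /orP[]/eqP->; rewrite cu.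
Qed.

Lemma cyc_avoid n (G : graph n) F u v : u != v -> F \in cycle_subgraphs G ->
  [set u; v] \in F -> connect (adj (G :\ [set u; v])) u v.
Proof.
move=> uv.
rewrite inE => /andP[FG /existsP[k /existsP[f /and3P[k3 /injectiveP fi /eqP EF]]]].
have kp : 0 < k by lia.
subst F => /imsetP[i _ Ei].
rewrite (gg_ordS kp) -(gg_ord kp f) in Ei.
set g := gg kp f in Ei.
have key : forall j, i.+1 <= j < i.+1 + k.-1 ->
    adj (G :\ [set u; v]) (g j) (g j.+1).
  move=> j hj; rewrite /adj in_setD1; apply/andP; split; last first.
    by apply: (subsetP FG); rewrite gg_edge.
  apply/negP => /eqP E.
  have iv : g i != g i.+1.
    apply/negP => /eqP /(gg_inj fi); rewrite -[in RHS]addn1 -[in LHS](addn0 i).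
    move/eqP; rewrite eqn_modDl mod0n modn_small //; lia.
  have jE : j = i + (j - i) by lia.
  have s0 : 0 < j - i < k by lia.
  rewrite Ei in E.
  case: (set2_cases iv (esym E)) => [[/(gg_inj fi) h1 _]|[/(gg_inj fi) h1 /(gg_inj fi) h2]].
    have : (i + (j - i) == i + 0 %[mod k]) by rewrite -jE addn0 h1.
    rewrite eqn_modDl mod0n modn_small; lia.
  have : (i + (j - i) == i + 1 %[mod k]) by rewrite -jE addn1 h1.
  rewrite eqn_modDl (modn_small (_ : 1 < k)); last lia.
  rewrite modn_small; last lia.
  move=> /eqP s1.
  have : (i + (j - i).+1 == i + 0 %[mod k]) by rewrite addnS -jE addn0 h2.
  rewrite eqn_modDl mod0n modn_small; lia.
have := walk key; rewrite (_ : i.+1 + k.-1 = i + k); last lia.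
rewrite /g gg_add -/g.
case: (set2_cases uv Ei) => [[-> ->]|[-> ->]] //.
by rewrite connect_symG.
Qed.

Lemma path_cycle n (G : graph n) u v : u != v -> [set u; v] \in G ->
  connect (adj (G :\ [set u; v])) u v ->
  exists F, (F \in cycle_subgraphs G) && ([set u; v] \in F).
Proof.
move=> uv eG /connectP[p pth vE].
move: vE; case: (shortenP pth) => p' pth' uq _ vE {pth}.
have sp : 1 < size p'.
  move: pth' uv eG vE {uq}; case: p' => [|a [|b p2]] /=; first by move=> _ uv _ vE; rewrite vE eqxx in uv.
  move=> /andP[h _] _ _ vE; move: h; rewrite vE /adj in_setD1 eqxx //.
  by [].
set q := u :: p'.
set k := size q.
have kE : k = (size p').+1 by [].
have k3 : 2 < k.
  exact: sp.
have kn : k < n.+1.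
  have := max_card (mem q); rewrite card_ord (card_uniqP uq) -/k; lia.
pose kk : 'I_n.+1 := Ordinal kn.
pose f : {ffun 'I_k -> 'I_n} := [ffun i : 'I_k => nth u q i].
have fE : forall i : 'I_k, f i = nth u q i by move=> i; rewrite ffunE.
have edge : forall i : 'I_k, [set f i; f (ordS i)] \in G.
  move=> i; rewrite !fE /=.
  have [hi|hi] := ltnP i.+1 k.
    rewrite modn_small //.
    have := (pathP u pth') i; rewrite -/q => /(_ _) h.
    have h2 : i < size p' by lia.
    have := h h2.
    by rewrite /adj in_setD1 => /andP[].
  have ik : i.+1 = k by have := ltn_ord i; lia.
  rewrite ik modnn /= /q.
  have -> : nth u (u :: p') i = v.
    rewrite vE (_ : (i : nat) = size p'); last lia.
    by rewrite -[size p']/((size (u :: p')).-1) nth_last.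
  by rewrite setUC.
exists [set [set f i; f (ordS i)] | i : 'I_kk].
apply/andP; split.
  rewrite inE; apply/andP; split.
    by apply/subsetP => _ /imsetP[i _ ->]; apply: edge.
  apply/existsP; exists kk; apply/existsP; exists f.
  rewrite k3 eqxx andbT /=; apply/injectiveP => i j; rewrite !fE.
  by move/eqP; rewrite nth_uniq // => /eqP /val_inj.
have kp : k.-1 < k by lia.
apply/imsetP; exists (Ordinal kp) => //.
rewrite !fE /= -[k.-1.+1]/(k.-1).+1 prednK; last lia.
rewrite modnn /=.
have -> : nth u (u :: p') k.-1 = v by rewrite vE kE -[(size p').+1]/(size (u :: p')) nth_last.
by rewrite setUC.
Qed.

Lemma comp_self n (G : graph n) x : x \in Defs.comp G x.
Proof. by rewrite inE connect0. Qed.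

Lemma kappa_same n (G : graph n) u v : u != v ->
  connect (adj (G :\ [set u; v])) u v -> kappa (G :\ [set u; v]) = kappa G.
Proof.
move=> uv cuv.
have E : forall x, Defs.comp (G :\ [set u; v]) x = Defs.comp G x.
  move=> x; apply/setP => y; rewrite !inE; apply/idP/idP; first exact: connect_subD.
  move/(connectD uv) => /or3P[//| /andP[h1 h2] | /andP[h1 h2]].
    exact: connect_trans (connect_trans h1 cuv) h2.
  by apply: connect_trans (connect_trans h1 _) h2; rewrite connect_symG.
by rewrite /kappa (eq_imset _ E).
Qed.

Lemma kappa_split n (G : graph n) u v : u != v -> [set u; v] \in G ->
  ~~ connect (adj (G :\ [set u; v])) u v -> kappa (G :\ [set u; v]) = (kappa G).+1.
Proof.
move=> uv eG ncuv.
set G' := G :\ [set u; v].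
set Cu := Defs.comp G' u; set Cv := Defs.comp G' v.
set T := [set Defs.comp G' x | x in ~: (Cu :|: Cv)].
have H1 : forall x, x \notin Cu :|: Cv -> Defs.comp G x = Defs.comp G' x.
  move=> x; rewrite !inE negb_or => /andP[nux nvx].
  apply/setP => y; rewrite !inE; apply/idP/idP; last exact: connect_subD.
  move/(connectD uv) => /or3P[//| /andP[h1 h2] | /andP[h1 h2]].
    by rewrite connect_symG h1 in nux.
  by rewrite connect_symG h1 in nvx.
have H2 : Defs.comp G u = Cu :|: Cv.
  apply/setP => y; rewrite !inE; apply/idP/idP.
    move/(connectD uv) => /or3P[-> // | /andP[h1 ->] | /andP[h1 h2]].
      by rewrite orbT.
    by rewrite (negbTE ncuv) in h1.
  have cuvG : connect (adj G) u v by apply: connect1.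
  case/orP => h; first exact: connect_subD h.
  exact: connect_trans cuvG (connect_subD h).
have inT : forall Z, Z \in T -> exists2 x, x \notin Cu :|: Cv & Z = Defs.comp G' x.
  by move=> Z /imsetP[x]; rewrite inE => hx ->; exists x.
have SG : [set Defs.comp G x | x : 'I_n] = (Cu :|: Cv) |: T.
  apply/setP => Z; apply/imsetP/setU1P.
    case=> x _ ->.
    case: (boolP (x \in Cu :|: Cv)) => hx.
      left; rewrite -H2; apply: comp_eq.
      case/setUP: hx => h; rewrite inE in h; rewrite connect_symG.
        exact: connect_subD h.
      apply: connect_trans (connect1 _) (connect_subD h).
      exact: eG.
    by right; rewrite H1 //; apply: imset_f; rewrite inE.
  case=> [->| /inT [x hx ->]]; first by exists u.
  by exists x => //; rewrite H1.
have SG' : [set Defs.comp G' x | x : 'I_n] = Cu |: (Cv |: T).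
  apply/setP => Z; apply/imsetP/setU1P.
    case=> x _ ->.
    case: (boolP (x \in Cu :|: Cv)) => hx.
      case/setUP: hx => h; rewrite inE in h.
        by left; apply: comp_eq; rewrite connect_symG.
      by right; apply/setU1P; left; apply: comp_eq; rewrite connect_symG.
    by right; apply/setU1P; right; apply: imset_f; rewrite inE.
  case=> [->| /setU1P [->| /inT [x hx ->]]]; first by exists u.
    by exists v.
  by exists x.
have nT : forall x, x \in Cu :|: Cv -> Defs.comp G' x \notin T.
  move=> x hx; apply/negP => /inT [y hy E].
  have : y \in Defs.comp G' x by rewrite E comp_self.
  rewrite inE => cxy; move: hy hx; rewrite !inE => /norP[h1 h2] /orP[] h.
    by rewrite (connect_trans h cxy) in h1.
  by rewrite (connect_trans h cxy) in h2.
rewrite /kappa -/G' SG SG' !cardsU1.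
have -> : (Cu :|: Cv) \notin T.
  apply/negP => /inT [y hy E]; move: hy; rewrite E.
  by rewrite comp_self.
have -> : Cu \notin Cv |: T.
  rewrite in_setU1 negb_or; apply/andP; split.
    apply/negP => /eqP E.
    have : u \in Cv by rewrite -E comp_self.
    by rewrite inE connect_symG (negbTE ncuv).
  by apply: nT; rewrite !inE connect0.
have -> : Cv \notin T by apply: nT; rewrite !inE connect0 orbT.
by [].
Qed.

Lemma card_bool_sum (T : finType) (A : {set T}) : \sum_(i : T) (i \in A) = #|A|.
Proof. by rewrite -sum1_card [RHS]big_mkcond /=; apply: eq_bigr => i _; case: (i \in A). Qed.

Lemma degsum n (G : graph n) : simple_graph G -> \sum_i deg G i = 2 * #|G|.
Proof.
move=> sG.
have -> : \sum_i deg G i = \sum_i \sum_(e in G) (i \in e).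
  apply: eq_bigr => i _; rewrite /deg -sum1_card big_mkcond /= [RHS]big_mkcond /=.
  by apply: eq_bigr => e _; rewrite inE; case: (e \in G); case: (i \in e).
rewrite exchange_big /=.
rewrite (eq_bigr (fun _ => 2)); last by move=> e eG; rewrite card_bool_sum sG.
by rewrite sum_nat_const mulnC.
Qed.

Lemma cycles0 n : cycles (set0 : graph n) = 0.
Proof.
apply/eqP; rewrite cards_eq0; apply/eqP/setP => F; rewrite !inE.
apply/negP => /andP[FG /existsP[k /existsP[f /and3P[k3 _ /eqP EF]]]].
have kp : 0 < k by lia.
have : [set f (Ordinal kp); f (ordS (Ordinal kp))] \in F by rewrite EF; apply/imsetP; exists (Ordinal kp).
by move/(subsetP FG); rewrite inE.
Qed.

Lemma kappa0 n : kappa (set0 : graph n) = n.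
Proof.
have E : forall x, Defs.comp (set0 : graph n) x = [set x].
  move=> x; apply/setP => y; rewrite !inE; apply/idP/idP; last by move/eqP->; rewrite connect0.
  case/connectP => [[|z p]] /=; first by move=> _ ->.
  by rewrite /adj inE.
rewrite /kappa (eq_imset _ E) card_imset ?card_ord //.
exact: set1_inj.
Qed.

Lemma pf_sub n (G : graph n) e : pseudoforest G -> pseudoforest (G :\ e).
Proof.
move=> pf x; apply: leq_trans (pf x); apply: subset_leq_card; apply/subsetP => F.
rewrite !inE => /andP[/andP[FG cF] /forallP h]; rewrite cF.
move: FG; rewrite subsetD1 => /andP[-> _] /=.
apply/forallP => e'; apply/implyP => eF; have := implyP (h e') eF.
move=> /subsetP s; apply/subsetP => y /s; rewrite !inE; exact: connect_subD.
Qed.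

Lemma cyc_split n (G : graph n) e :
  cycles G = cycles (G :\ e) + #|[set F in cycle_subgraphs G | e \in F]|.
Proof.
rewrite /cycles -(cardsID [set F : {set {set 'I_n}} | e \in F] (cycle_subgraphs G)) addnC.
have -> : cycle_subgraphs G :\: [set F : {set {set 'I_n}} | e \in F] = cycle_subgraphs (G :\ e).
  apply/setP => F; rewrite !inE subsetD1.
  by case: (F \subset G); case: (e \in F).
have -> : cycle_subgraphs G :&: [set F : {set {set 'I_n}} | e \in F] = [set F in cycle_subgraphs G | e \in F].
  by apply/setP => F; rewrite !inE.
by [].
Qed.

Lemma formula n m (G : graph n) : #|G| = m -> simple_graph G -> pseudoforest G ->
  #|G| + kappa G = n + cycles G.
Proof.
elim: m G => [|m IH] G hm sG pfG.
  by rewrite (cards0_eq hm) cycles0 kappa0 cards0 addn0.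
have [e eG] : exists e, e \in G by apply/card_gt0P; rewrite hm.
have /cards2P [u [v [uv Ee]]] : #|e| == 2 by rewrite sG.
subst e.
set G' := G :\ [set u; v].
have hm' : #|G'| = m by move: hm; rewrite (cardsD1 [set u; v]) eG add1n => -[].
have sG' : simple_graph G' by move=> e; rewrite in_setD1 => /andP[_ /sG].
have IH' := IH G' hm' sG' (pf_sub _ pfG).
rewrite (cyc_split G [set u; v]) -/G'.
have cG : #|G| = #|G'|.+1 by rewrite hm hm'.
case: (boolP (connect (adj G') u v)) => cuv.
  rewrite -(kappa_same uv cuv) -/G'.
  have -> : #|[set F in cycle_subgraphs G | [set u; v] \in F]| = 1.
    apply/eqP; rewrite eqn_leq; apply/andP; split.
      apply: leq_trans (pfG u); apply: subset_leq_card; apply/subsetP => F.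
      rewrite in_set => /andP[cF eF]; rewrite in_set cF /=.
      by apply: (cyc_in_comp cF eF); rewrite !inE eqxx.
    have [F /andP[cF eF]] := path_cycle uv eG cuv.
    by apply/card_gt0P; exists F; rewrite inE cF eF.
  lia.
have -> : #|[set F in cycle_subgraphs G | [set u; v] \in F]| = 0.
  apply/eqP; rewrite cards_eq0; apply/eqP/setP => F; rewrite in_set in_set0.
  apply/negP => /andP[cF eF].
  by rewrite (cyc_avoid uv cF eF) in cuv.
move: IH'; rewrite (kappa_split uv eG cuv); lia.
Qed.

Theorem corollary5p3 (n : nat) (s : 'I_n -> nat) (G H : graph n) :
  in_P s G -> in_P s H ->
  (cycles G = kappa G <-> cycles H = kappa H).
Proof.
case=> sG pG dG [sH pH dH].
have fG := formula (erefl _) sG pG.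
have fH := formula (erefl _) sH pH.
have eGH : #|G| = #|H|.
  have : 2 * #|G| = 2 * #|H|.
    rewrite -!degsum //; apply: eq_bigr => i _; by rewrite dG dH.
  lia.
split => h; lia.
Qed.
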